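(* Define $g:\mathbb N\to\mathbb N$ by $$g(n)=\begin{cases}\lfloor\varphi n\rfloor, & n\in R_{2,0},\\ \lfloor\varphi n-2\rfloor, & n\in R_{1,0},\\ \lfloor(\varphi-1) n+2\rfloor, & n\in R_{2,2},\\ \lfloor(\varphi-1) n+1\rfloor, & n\in R_{3,1}.\end{cases}$$ Then $g$ is an $R_{i,j}$-permutation of $\mathbb N$ of order $2$ (a bijection of $\mathbb N$ with $g\circ g=\mathrm{id}\neq g$). Its first values are $2,1,4,3,6,5,9,12,7,14,\dots$.
   Context: $\mathbb N=\{1,2,\dots\}$, $\varphi=\frac{1+\sqrt5}{2}$, $F$ the Fibonacci numbers ($F(0)=0,F(1)=F(2)=1$). For $i\in\mathbb Z^{\ge0},j\in\mathbb Z$, $R_{i,j}$ is the range of $n\mapsto F(i+1)\lfloor n\varphi\rfloor+F(i)n-j$, $n\in\mathbb N$. An $R_{i,j}$-permutation is a permutation $\pi$ of $\mathbb N$ defined piecewise on a finite partition of $\mathbb N$ into sets $R_{i,j}$, with $\pi(n)=\lfloor(a\varphi+b)n+c\rfloor$ on each piece for integers $a,b,c$ depending on the piece. *)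

(* Defs.v *)
From Stdlib Require Import Reals ZArith.
Open Scope R_scope.

Definition phi : R := (1 + sqrt 5) / 2.

(* floor of a real number: Int_part x = up x - 1 is the floor of x *)
Definition rfloor (x : R) : Z := Int_part x.

(* Fibonacci numbers, F 0 = 0, F 1 = F 2 = 1 *)
Fixpoint fib (n : nat) : nat :=
  match n with
  | O => O
  | S m => match m with
           | O => 1%nat
           | S k => (fib m + fib k)%nat
           end
  end.

(* R_{i,j} = range of n |-> F(i+1) floor(n phi) + F(i) n - j, n >= 1,
   as a predicate on Z *)
Definition Rij (i : nat) (j : Z) (m : Z) : Prop :=
  exists n : nat, (1 <= n)%nat /\
    m = (Z.of_nat (fib (i + 1)) * rfloor (INR n * phi)
         + Z.of_nat (fib i) * Z.of_nat n - j)%Z.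

(* the positive integers N = {1,2,...} as a predicate on Z *)
Definition posZ (m : Z) : Prop := (0 < m)%Z.

(* Main.v *)
Require Import Defs.
From Stdlib Require Import Reals ZArith Lra Lia.
Open Scope R_scope.

Lemma sqrt5_bounds : 2.236 < sqrt 5 < 2.2361.
Proof.
  pose proof (sqrt_sqrt 5 ltac:(lra)) as H. pose proof (sqrt_pos 5).
  split; nra.
Qed.

Lemma phi_bounds : 1.618 < phi < 1.6181.
Proof. unfold phi; pose proof sqrt5_bounds; lra. Qed.

Lemma phi_sq : phi * phi = phi + 1.
Proof.
  unfold phi. pose proof (sqrt_sqrt 5 ltac:(lra)) as H.
  nra.
Qed.

Lemma no_sq5_aux : forall N : nat, forall x y : Z, (Z.abs y < Z.of_nat N)%Z -> (x*x = 5*(y*y))%Z -> y = 0%Z.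
Proof.
  induction N; intros x y Hy Hxy.
  - lia.
  - assert (Hm : forall z w : Z, (z*z = 5*w)%Z -> exists z', z = (5*z')%Z).
    { intros z w Hz.
      pose proof (Z.div_mod z 5 ltac:(lia)) as Hd.
      pose proof (Z.mod_pos_bound z 5 ltac:(lia)) as Hb.
      set (q := (z / 5)%Z) in *. set (r := (z mod 5)%Z) in *.
      assert (r*r = 5*(w - 5*q*q - 2*q*r))%Z by (rewrite Hd in Hz; lia).
      assert (r = 0 \/ r = 1 \/ r = 2 \/ r = 3 \/ r = 4)%Z as Hr by lia.
      destruct Hr as [Hr|[Hr|[Hr|[Hr|Hr]]]]; rewrite Hr in *; try lia.
      exists q. lia. }
    destruct (Hm x (y*y)%Z Hxy) as [x' Hx'].
    subst x.
    assert (Hyy : (y*y = 5*(x'*x'))%Z) by lia.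
    destruct (Hm y (x'*x')%Z Hyy) as [y' Hy'].
    subst y.
    assert (x'*x' = 5*(y'*y'))%Z by lia.
    destruct (Z.eq_dec y' 0) as [E|E]; [lia|].
    exfalso.
    assert (y' = 0%Z); [|lia].
    apply (IHN x'); [lia|assumption].
Qed.

Lemma no_sq5 : forall x y : Z, (x*x = 5*(y*y))%Z -> y = 0%Z.
Proof. intros x y H. apply (no_sq5_aux (S (Z.to_nat (Z.abs y))) x y); lia. Qed.

Lemma phi_irr : forall n k : Z, n <> 0%Z -> IZR n * phi <> IZR k.
Proof.
  intros n k Hn E. unfold phi in E.
  pose proof (sqrt_sqrt 5 ltac:(lra)) as H.
  assert (E2 : IZR n * sqrt 5 = IZR (2*k - n)).
  { rewrite minus_IZR, mult_IZR. lra. }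
  assert (E3 : IZR ((2*k-n)*(2*k-n)) = IZR (5*(n*n))).
  { rewrite !mult_IZR, <- E2. rewrite <- H at 3. simpl. ring. }
  apply eq_IZR in E3. apply Hn. eapply no_sq5. exact E3.
Qed.

Lemma rfloor_le x : IZR (rfloor x) <= x.
Proof. unfold rfloor. apply (base_Int_part x). Qed.
Lemma rfloor_gt x : x < IZR (rfloor x) + 1.
Proof. unfold rfloor. pose proof (base_Int_part x). lra. Qed.
Lemma rfloor_unique k x : IZR k <= x -> x < IZR k + 1 -> rfloor x = k.
Proof.
  intros H1 H2. pose proof (rfloor_le x). pose proof (rfloor_gt x).
  assert (k < rfloor x + 1)%Z by (apply lt_IZR; rewrite plus_IZR; simpl; lra).
  assert (rfloor x < k + 1)%Z by (apply lt_IZR; rewrite plus_IZR; simpl; lra).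
  lia.
Qed.

Definition A (n : Z) : Z := rfloor (IZR n * phi).

Lemma theta n : (1 <= n)%Z -> exists t, 0 < t < 1 /\ IZR (A n) = IZR n * phi - t.
Proof.
  intros Hn. exists (IZR n * phi - IZR (A n)). unfold A.
  pose proof (rfloor_le (IZR n * phi)). pose proof (rfloor_gt (IZR n * phi)).
  assert (IZR n * phi <> IZR (rfloor (IZR n * phi))) by (apply phi_irr; lia).
  repeat split; lra.
Qed.

Ltac setup n Hn :=
  let t := fresh "t" in let Ht := fresh "Ht" in let Hat := fresh "Hat" in
  destruct (theta n Hn) as [t [Ht Hat]];
  pose proof phi_bounds;
  assert (IZR n * phi * phi = IZR n * phi + IZR n) by
    (rewrite Rmult_assoc, phi_sq; ring);
  assert (1.618 * t <= t * phi) by (rewrite (Rmult_comm t phi); apply Rmult_le_compat_r; lra);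
  assert (t * phi <= 1.6181 * t) by (rewrite (Rmult_comm t phi); apply Rmult_le_compat_r; lra);
  assert (1 <= IZR n) by (apply IZR_le; lia);
  assert (1.618 * IZR n <= IZR n * phi) by (rewrite (Rmult_comm (IZR n) phi); apply Rmult_le_compat_r; lra).

Lemma A_ge n : (1 <= n)%Z -> (n <= A n)%Z.
Proof.
  intros Hn. setup n Hn.
  assert (IZR n < IZR (A n) + 1) by lra.
  assert (n < A n + 1)%Z by (apply lt_IZR; rewrite plus_IZR; lra). lia.
Qed.

Lemma A_A n : (1 <= n)%Z -> A (A n) = (A n + n - 1)%Z.
Proof.
  intros Hn. setup n Hn. unfold A at 1. apply rfloor_unique;
  rewrite ?minus_IZR, ?plus_IZR, Hat; simpl; lra.
Qed.

Lemma A_B n : (1 <= n)%Z -> A (A n + n) = (2 * A n + n)%Z.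
Proof.
  intros Hn. setup n Hn. unfold A at 1. apply rfloor_unique;
  rewrite ?minus_IZR, ?plus_IZR, ?mult_IZR, Hat; simpl; lra.
Qed.

Lemma phi_m1 x : x * phi * (phi - 1) = x.
Proof. pose proof phi_sq. assert (phi*(phi-1) = 1) by lra.
  rewrite Rmult_assoc, H0. ring. Qed.

Lemma phi_m2 x : x * (phi * phi) * (2 - phi) = x.
Proof. pose proof phi_sq. assert (phi*phi*(2-phi) = 1).
  { rewrite H. assert (phi*(phi+1) = 2*phi+1) by lra.
    replace ((phi+1)*(2-phi)) with (2*phi + 2 - phi*(phi+1)) by ring. lra. }
  rewrite Rmult_assoc, H0. ring. Qed.

Lemma A_mono n n' : (1 <= n)%Z -> (n < n')%Z -> (A n < A n')%Z.
Proof.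
  intros Hn Hnn. pose proof phi_bounds.
  pose proof (rfloor_le (IZR n * phi)). pose proof (rfloor_gt (IZR n' * phi)).
  assert (1 <= IZR n' - IZR n) by (rewrite <- minus_IZR; apply IZR_le; lia).
  assert (1 * phi <= (IZR n' - IZR n) * phi) by (apply Rmult_le_compat_r; lra).
  apply lt_IZR. unfold A. lra.
Qed.

Lemma A_inj n n' : (1 <= n)%Z -> (1 <= n')%Z -> A n = A n' -> n = n'.
Proof.
  intros H1 H2 E. destruct (Z.lt_trichotomy n n') as [L|[L|L]]; auto.
  - pose proof (A_mono n n' H1 L). lia.
  - pose proof (A_mono n' n H2 L). lia.
Qed.

Lemma disjAB p q : (1 <= p)%Z -> (1 <= q)%Z -> A p <> (A q + q)%Z.
Proof.
  intros Hp Hq E.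
  destruct (theta p Hp) as [t1 [Ht1 Ha1]].
  destruct (theta q Hq) as [t2 [Ht2 Ha2]].
  pose proof phi_bounds.
  assert (E' : IZR (A p) = IZR (A q) + IZR q) by (rewrite E, plus_IZR; reflexivity).
  assert (Hp' : IZR p = (IZR (A p) + t1) * (phi - 1)).
  { replace (IZR (A p) + t1) with (IZR p * phi) by lra. symmetry. apply phi_m1. }
  assert (Hq' : IZR q = (IZR (A p) + t2) * (2 - phi)).
  { replace (IZR (A p) + t2) with (IZR q * (phi * phi)).
    - symmetry. apply phi_m2.
    - rewrite phi_sq. lra. }
  assert (1.618 * t1 <= t1 * phi) by (rewrite (Rmult_comm t1 phi); apply Rmult_le_compat_r; lra).
  assert (t1 * phi <= 1.6181 * t1) by (rewrite (Rmult_comm t1 phi); apply Rmult_le_compat_r; lra).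
  assert (1.618 * t2 <= t2 * phi) by (rewrite (Rmult_comm t2 phi); apply Rmult_le_compat_r; lra).
  assert (t2 * phi <= 1.6181 * t2) by (rewrite (Rmult_comm t2 phi); apply Rmult_le_compat_r; lra).
  assert (A p < p + q)%Z by (apply lt_IZR; rewrite plus_IZR; lra).
  assert (0 < (1 - t1)*(phi - 1)) by (apply Rmult_lt_0_compat; lra).
  assert (0 < (1 - t2)*(2 - phi)) by (apply Rmult_lt_0_compat; lra).
  assert (p + q < A p + 1)%Z by (apply lt_IZR; rewrite !plus_IZR; simpl; lra).
  lia.
Qed.

Lemma cover m : (1 <= m)%Z ->
  (exists p, (1 <= p)%Z /\ m = A p) \/ (exists q, (1 <= q)%Z /\ m = (A q + q)%Z).
Proof.
  intros Hm. pose proof phi_bounds.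
  set (x := IZR (m+1) * (phi - 1)).
  set (p := rfloor x).
  pose proof (rfloor_le x) as F1. pose proof (rfloor_gt x) as F2. fold p in F1, F2.
  set (r := x - IZR p).
  assert (Hr0 : 0 < r).
  { assert (x <> IZR p); [|unfold r; lra].
    intro E. unfold x in E.
    apply (phi_irr (m+1) (p + m + 1) ltac:(lia)).
    rewrite !plus_IZR in *. simpl in *. lra. }
  assert (Hr1 : r < 1) by (unfold r; lra).
  assert (Hpphi : IZR p * phi = IZR m + 1 - r * phi).
  { assert (IZR p = x - r) by (unfold r; lra). rewrite H0. unfold x.
    rewrite Rmult_minus_distr_r. rewrite (Rmult_assoc _ (phi-1) phi), (Rmult_comm (phi-1) phi),
      <- Rmult_assoc, phi_m1, plus_IZR. simpl. ring. }
  assert (1 <= IZR m) by (apply IZR_le; lia).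
  assert (0 < r * phi) by (apply Rmult_lt_0_compat; lra).
  assert (r * phi < 1 * phi) by (apply Rmult_lt_compat_r; lra).
  destruct (Rlt_or_le (r * phi) 1) as [C|C].
  - left. exists p.
    assert (1 <= p)%Z.
    { destruct (Z_le_gt_dec 1 p) as [G|G]; auto. exfalso.
      assert (IZR p <= 0) by (apply IZR_le; lia).
      assert (IZR p * phi <= 0 * phi) by (apply Rmult_le_compat_r; lra). lra. }
    split; auto. unfold A. symmetry. apply rfloor_unique; lra.
  - right. exists (m - p)%Z.
    assert (Hrpp : 1 * phi <= r * phi * phi) by (apply Rmult_le_compat_r; lra).
    assert (Hid : r * phi * phi = r * phi + r) by (rewrite Rmult_assoc, phi_sq; ring).
    assert (HA : A (m - p) = p).
    { unfold A. apply rfloor_unique; rewrite minus_IZR, Rmult_minus_distr_r, Hpphi;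
      unfold r, x in *; rewrite plus_IZR in *; simpl in *; lra. }
    assert (1 <= m - p)%Z.
    { destruct (Z_le_gt_dec 1 (m-p)) as [G|G]; auto. exfalso.
      assert (IZR (m - p) <= 0) by (apply IZR_le; lia).
      assert (IZR (m-p) * phi <= 0 * phi) by (apply Rmult_le_compat_r; lra).
      pose proof (rfloor_le (IZR (m-p) * phi)) as HH. fold (A (m-p)) in HH. rewrite HA in HH.
      assert (IZR m <= IZR p) by (apply IZR_le; lia). lra. }
    split; auto. rewrite HA. lia.
Qed.

Lemma G1 n : (1 <= n)%Z -> rfloor (phi * IZR (A n + n) - 2) = (2 * A n + n - 2)%Z.
Proof. intros Hn. setup n Hn. apply rfloor_unique;
  rewrite ?minus_IZR, ?plus_IZR, ?mult_IZR, Hat; simpl; lra. Qed.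
Lemma G2 n : (1 <= n)%Z -> rfloor ((phi - 1) * IZR (2 * A n + n - 2) + 2) = (A n + n)%Z.
Proof. intros Hn. setup n Hn. apply rfloor_unique;
  rewrite ?minus_IZR, ?plus_IZR, ?mult_IZR, Hat; simpl; lra. Qed.
Lemma G3 n : (1 <= n)%Z -> rfloor (phi * IZR (2 * A n + n)) = (3 * A n + 2 * n - 1)%Z.
Proof. intros Hn. setup n Hn. apply rfloor_unique;
  rewrite ?minus_IZR, ?plus_IZR, ?mult_IZR, Hat; simpl; lra. Qed.
Lemma G4 n : (1 <= n)%Z -> rfloor ((phi - 1) * IZR (3 * A n + 2 * n - 1) + 1) = (2 * A n + n)%Z.
Proof. intros Hn. setup n Hn. apply rfloor_unique;
  rewrite ?minus_IZR, ?plus_IZR, ?mult_IZR, Hat; simpl; lra. Qed.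

Lemma A1 : A 1 = 1%Z.
Proof. pose proof phi_bounds. unfold A. apply rfloor_unique; simpl; lra. Qed.
Lemma A2 : A 2 = 3%Z.
Proof. pose proof phi_bounds. unfold A. apply rfloor_unique; simpl; lra. Qed.
Lemma A3 : A 3 = 4%Z.
Proof. pose proof phi_bounds. unfold A. apply rfloor_unique; simpl; lra. Qed.
Lemma A4 : A 4 = 6%Z.
Proof. pose proof phi_bounds. unfold A. apply rfloor_unique; simpl; lra. Qed.

Lemma Rij_iff i j m : Rij i j m <-> exists n : Z, (1 <= n)%Z /\
  m = (Z.of_nat (fib (i + 1)) * A n + Z.of_nat (fib i) * n - j)%Z.
Proof.
  split.
  - intros [n [H1 H2]]. exists (Z.of_nat n). split; [lia|].
    rewrite H2. unfold A. rewrite <- INR_IZR_INZ. reflexivity.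
  - intros [n [H1 H2]]. exists (Z.to_nat n). split; [lia|].
    rewrite H2. unfold A. rewrite INR_IZR_INZ, Z2Nat.id by lia. reflexivity.
Qed.

Lemma R20 m : Rij 2 0 m <-> exists n, (1 <= n)%Z /\ m = (2 * A n + n)%Z.
Proof. rewrite Rij_iff. change (Z.of_nat (fib (2+1))) with 2%Z; change (Z.of_nat (fib 2)) with 1%Z.
  split; intros [n [H1 H2]]; exists n; split; auto; lia. Qed.
Lemma R10 m : Rij 1 0 m <-> exists n, (1 <= n)%Z /\ m = (A n + n)%Z.
Proof. rewrite Rij_iff. change (Z.of_nat (fib (1+1))) with 1%Z; change (Z.of_nat (fib 1)) with 1%Z.
  split; intros [n [H1 H2]]; exists n; split; auto; lia. Qed.
Lemma R22 m : Rij 2 2 m <-> exists n, (1 <= n)%Z /\ m = (2 * A n + n - 2)%Z.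
Proof. rewrite Rij_iff. change (Z.of_nat (fib (2+1))) with 2%Z; change (Z.of_nat (fib 2)) with 1%Z.
  split; intros [n [H1 H2]]; exists n; split; auto; lia. Qed.
Lemma R31 m : Rij 3 1 m <-> exists n, (1 <= n)%Z /\ m = (3 * A n + 2 * n - 1)%Z.
Proof. rewrite Rij_iff. change (Z.of_nat (fib (3+1))) with 3%Z; change (Z.of_nat (fib 3)) with 2%Z.
  split; intros [n [H1 H2]]; exists n; split; auto; lia. Qed.

Lemma T20 n : (1 <= n)%Z -> (2 * A n + n)%Z = A (A n + n).
Proof. intros H. rewrite A_B; auto. Qed.
Lemma T22 n : (1 <= n)%Z -> (2 * A n + n - 2)%Z = A (A (A n)).
Proof. intros H. pose proof (A_ge n H). rewrite (A_A (A n)) by lia. rewrite A_A; lia. Qed.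
Lemma T31 n : (1 <= n)%Z -> (3 * A n + 2 * n - 1)%Z = A (A (A n + n)).
Proof. intros H. pose proof (A_ge n H). rewrite (A_A (A n + n)) by lia. rewrite A_B; lia. Qed.

Lemma pieces m : (1 <= m)%Z -> exists n, (1 <= n)%Z /\
  (m = (A n + n)%Z \/ m = (2 * A n + n - 2)%Z \/ m = (2 * A n + n)%Z \/ m = (3 * A n + 2 * n - 1)%Z).
Proof.
  intros Hm. destruct (cover m Hm) as [[k [Hk E]]|[n [Hn E]]].
  2:{ exists n; auto. }
  destruct (cover k Hk) as [[j [Hj E2]]|[n [Hn E2]]].
  2:{ exists n. split; auto. right; right; left. subst. rewrite T20; auto. }
  destruct (cover j Hj) as [[n [Hn E3]]|[n [Hn E3]]].
  - exists n. split; auto. right; left. subst. rewrite T22; auto.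
  - exists n. split; auto. right; right; right. subst. rewrite T31; auto.
Qed.

Theorem theorem4p2 :
  (* the four pieces form a partition of N *)
  (forall m : Z, posZ m ->
     Rij 2%nat 0%Z m \/ Rij 1%nat 0%Z m \/ Rij 2%nat 2%Z m \/ Rij 3%nat 1%Z m) /\
  (forall m : Z, ~ (Rij 2%nat 0%Z m /\ Rij 1%nat 0%Z m)) /\
  (forall m : Z, ~ (Rij 2%nat 0%Z m /\ Rij 2%nat 2%Z m)) /\
  (forall m : Z, ~ (Rij 2%nat 0%Z m /\ Rij 3%nat 1%Z m)) /\
  (forall m : Z, ~ (Rij 1%nat 0%Z m /\ Rij 2%nat 2%Z m)) /\
  (forall m : Z, ~ (Rij 1%nat 0%Z m /\ Rij 3%nat 1%Z m)) /\
  (forall m : Z, ~ (Rij 2%nat 2%Z m /\ Rij 3%nat 1%Z m)) /\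
  (* every piece lies inside N *)
  (forall m : Z, (Rij 2%nat 0%Z m \/ Rij 1%nat 0%Z m \/ Rij 2%nat 2%Z m \/ Rij 3%nat 1%Z m) -> posZ m) /\
  (* the function g defined piecewise has the claimed properties *)
  (forall g : Z -> Z,
     (forall n, posZ n -> Rij 2%nat 0%Z n -> g n = rfloor (phi * IZR n)) ->
     (forall n, posZ n -> Rij 1%nat 0%Z n -> g n = rfloor (phi * IZR n - 2)) ->
     (forall n, posZ n -> Rij 2%nat 2%Z n -> g n = rfloor ((phi - 1) * IZR n + 2)) ->
     (forall n, posZ n -> Rij 3%nat 1%Z n -> g n = rfloor ((phi - 1) * IZR n + 1)) ->
     (* g maps N to N bijectively *)
     (forall n, posZ n -> posZ (g n)) /\
     (forall n m, posZ n -> posZ m -> g n = g m -> n = m) /\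
     (forall m, posZ m -> exists n, posZ n /\ g n = m) /\
     (* order 2: g o g = id <> g *)
     (forall n, posZ n -> g (g n) = n) /\
     (exists n, posZ n /\ g n <> n) /\
     (* first values *)
     g 1%Z = 2%Z /\ g 2%Z = 1%Z /\ g 3%Z = 4%Z /\ g 4%Z = 3%Z /\ g 5%Z = 6%Z /\
     g 6%Z = 5%Z /\ g 7%Z = 9%Z /\ g 8%Z = 12%Z /\ g 9%Z = 7%Z /\ g 10%Z = 14%Z).
Proof.
  unfold posZ.
  assert (Pos : forall n, (1 <= n)%Z -> (1 <= A n)%Z) by (intros n H; pose proof (A_ge n H); lia).
  assert (NAB : forall p q, (1 <= p)%Z -> (1 <= q)%Z -> A p <> (A q + q)%Z) by exact disjAB.
  split.
  { intros m Hm. destruct (pieces m ltac:(lia)) as [n [Hn [E|[E|[E|E]]]]].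
    - right; left. apply R10. eauto.
    - right; right; left. apply R22. eauto.
    - left. apply R20. eauto.
    - right; right; right. apply R31. eauto. }
  split.
  { intros m [H1 H2]. apply R20 in H1. apply R10 in H2.
    destruct H1 as [n [Hn E1]]; destruct H2 as [n' [Hn' E2]].
    rewrite T20 in E1 by auto. subst. pose proof (Pos n Hn).
    apply (NAB (A n + n)%Z n'); auto; lia. }
  split.
  { intros m [H1 H2]. apply R20 in H1. apply R22 in H2.
    destruct H1 as [n [Hn E1]]; destruct H2 as [n' [Hn' E2]].
    rewrite T20 in E1 by auto. rewrite T22 in E2 by auto. subst.
    pose proof (Pos n Hn). pose proof (Pos n' Hn'). pose proof (Pos _ H0).
    apply A_inj in E2; try lia.
    apply (NAB (A n') n); auto. }
  split.
  { intros m [H1 H2]. apply R20 in H1. apply R31 in H2.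
    destruct H1 as [n [Hn E1]]; destruct H2 as [n' [Hn' E2]].
    rewrite T20 in E1 by auto. rewrite T31 in E2 by auto. subst.
    pose proof (Pos n Hn). pose proof (Pos n' Hn'). pose proof (Pos (A n' + n')%Z ltac:(lia)).
    apply A_inj in E2; try lia.
    apply (NAB (A n' + n')%Z n); auto; lia. }
  split.
  { intros m [H1 H2]. apply R10 in H1. apply R22 in H2.
    destruct H1 as [n [Hn E1]]; destruct H2 as [n' [Hn' E2]].
    rewrite T22 in E2 by auto. subst.
    pose proof (Pos n' Hn'). pose proof (Pos _ H).
    apply (NAB (A (A n')) n); auto. }
  split.
  { intros m [H1 H2]. apply R10 in H1. apply R31 in H2.
    destruct H1 as [n [Hn E1]]; destruct H2 as [n' [Hn' E2]].
    rewrite T31 in E2 by auto. subst.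
    pose proof (Pos n' Hn'). pose proof (Pos (A n' + n')%Z ltac:(lia)).
    apply (NAB (A (A n' + n')%Z) n); auto. }
  split.
  { intros m [H1 H2]. apply R22 in H1. apply R31 in H2.
    destruct H1 as [n [Hn E1]]; destruct H2 as [n' [Hn' E2]].
    rewrite T22 in E1 by auto. rewrite T31 in E2 by auto. subst.
    pose proof (Pos n Hn). pose proof (Pos _ H). pose proof (Pos n' Hn').
    pose proof (Pos (A n' + n')%Z ltac:(lia)) as Q1. pose proof (Pos _ Q1).
    apply A_inj in E2; try lia.
    apply A_inj in E2; try lia.
    exact (NAB n n' Hn Hn' E2). }
  split.
  { intros m [H|[H|[H|H]]].
    - apply R20 in H. destruct H as [n [Hn E]]. pose proof (Pos n Hn). lia.
    - apply R10 in H. destruct H as [n [Hn E]]. pose proof (Pos n Hn). lia.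
    - apply R22 in H. destruct H as [n [Hn E]]. pose proof (A_ge n Hn). lia.
    - apply R31 in H. destruct H as [n [Hn E]]. pose proof (Pos n Hn). lia. }
  intros g h20 h10 h22 h31.
  assert (g10 : forall n, (1 <= n)%Z -> g (A n + n)%Z = (2 * A n + n - 2)%Z).
  { intros n Hn. pose proof (Pos n Hn). rewrite h10; [apply G1; auto|lia|apply R10; eauto]. }
  assert (g22 : forall n, (1 <= n)%Z -> g (2 * A n + n - 2)%Z = (A n + n)%Z).
  { intros n Hn. pose proof (A_ge n Hn). rewrite h22; [apply G2; auto|lia|apply R22; eauto]. }
  assert (g20 : forall n, (1 <= n)%Z -> g (2 * A n + n)%Z = (3 * A n + 2 * n - 1)%Z).
  { intros n Hn. pose proof (Pos n Hn). rewrite h20; [apply G3; auto|lia|apply R20; eauto]. }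
  assert (g31 : forall n, (1 <= n)%Z -> g (3 * A n + 2 * n - 1)%Z = (2 * A n + n)%Z).
  { intros n Hn. pose proof (Pos n Hn). rewrite h31; [apply G4; auto|lia|apply R31; eauto]. }
  assert (gpos : forall n, (0 < n)%Z -> (0 < g n)%Z).
  { intros m Hm. destruct (pieces m ltac:(lia)) as [n [Hn [E|[E|[E|E]]]]]; subst;
    pose proof (A_ge n Hn).
    - rewrite g10; auto; lia.
    - rewrite g22; auto; lia.
    - rewrite g20; auto; lia.
    - rewrite g31; auto; lia. }
  assert (ginv : forall n, (0 < n)%Z -> g (g n) = n).
  { intros m Hm. destruct (pieces m ltac:(lia)) as [n [Hn [E|[E|[E|E]]]]]; subst.
    - rewrite g10, g22; auto.
    - rewrite g22, g10; auto.
    - rewrite g20, g31; auto.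
    - rewrite g31, g20; auto. }
  assert (g1 : g 1%Z = 2%Z).
  { pose proof (g22 1%Z ltac:(lia)) as H. rewrite A1 in H. exact H. }
  split; [exact gpos|].
  split.
  { intros n m Hn Hm E. rewrite <- (ginv n Hn), <- (ginv m Hm), E. reflexivity. }
  split.
  { intros m Hm. exists (g m). split; auto. }
  split; [exact ginv|].
  split.
  { exists 1%Z. split; [lia|]. rewrite g1. discriminate. }
  split; [exact g1|].
  split. { pose proof (g10 1%Z ltac:(lia)) as H. rewrite A1 in H. exact H. }
  split. { pose proof (g20 1%Z ltac:(lia)) as H. rewrite A1 in H. exact H. }
  split. { pose proof (g31 1%Z ltac:(lia)) as H. rewrite A1 in H. exact H. }
  split. { pose proof (g10 2%Z ltac:(lia)) as H. rewrite A2 in H. exact H. }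
  split. { pose proof (g22 2%Z ltac:(lia)) as H. rewrite A2 in H. exact H. }
  split. { pose proof (g10 3%Z ltac:(lia)) as H. rewrite A3 in H. exact H. }
  split. { pose proof (g20 2%Z ltac:(lia)) as H. rewrite A2 in H. exact H. }
  split. { pose proof (g22 3%Z ltac:(lia)) as H. rewrite A3 in H. exact H. }
  { pose proof (g10 4%Z ltac:(lia)) as H. rewrite A4 in H. exact H. }
Qed.
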